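(* Let $(G,w)$ be a finite connected positively weighted graph whose minimum degree is at least $2$. Then for every natural number $r\ge 1$ and every function $g\colon V(G)\to\mathbb{R}^+$, there exists a vertex $v$ of $G$ such that $$\lambda_1(\widetilde{G}(v,r),w)\ \ge\ \frac{2\sum_{v_1\in V(G)}\sqrt{d(v_1)-1}\sum_{v_2\in N(v_1)} w(v_1v_2)\sqrt{g(v_1)g(v_2)}}{\sum_{u\in V(G)} g(u)d(u)}\cos\left(\frac{\pi}{r+2}\right),$$ where $N(v_1)=\{u\in V(G): v_1u\in E(G)\}$.
   Context: A (positively) weighted graph $(G,w)$ is a simple graph $G$ with a weight function $w\colon E(G)\to\mathbb{R}^+$. $d(u)$ denotes the degree (number of incident edges) of $u$ in $G$. A non-backtracking walk is a walk $(v_0,v_1,\dots)$ with $v_i\neq v_{i+2}$ for all $i$ (walks of length at most $1$ are non-backtracking). The unraveled ball $\widetilde{G}(v,r)$ is the graph whose vertices are all non-backtracking walks in $G$ of length at most $r$ starting at $v$, two walks being adjacent iff one is a one-step extension of the other; it is given the lifted weight $w\big((v_0,\dots,v_{i-1})(v_0,\dots,v_{i-1},v_i)\big)=w(v_{i-1}v_i)$. (Equivalently, it is the ball of radius $r$ about $v$ in the universal cover of $G$.) For a weighted graph $(H,w)$, its adjacency matrix $A(H,w)$ has $(u,v)$-entry $w(uv)$ if $uv\in E(H)$ and $0$ otherwise, and $\lambda_1(H,w)$ denotes the spectral radius of $A(H,w)$ (the weighted spectral radius). *)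

(* Defs.v *)
From HB Require Import structures.
From mathcomp Require Import all_boot all_order all_algebra.
From mathcomp Require Import all_classical all_reals all_analysis.
From mathcomp Require Import complex.
Set Implicit Arguments. Unset Strict Implicit. Unset Printing Implicit Defensive.
Import Order.TTheory GRing.Theory Num.Theory.
Local Open Scope ring_scope.

Definition simple_graph (V : finType) (e : rel V) : Prop :=
  (forall x y, e x y = e y x) /\ (forall x, ~~ e x x).

Definition deg (V : finType) (e : rel V) (u : V) : nat := #|[set x | e u x]|.

Definition connected_graph (V : finType) (e : rel V) : Prop :=
  forall x y, connect e x y.

(* a positive weight function on the edges, given as a symmetric function V -> V -> R
   whose values on non-edges are irrelevant *)
Definition pos_weight (R : realType) (V : finType) (e : rel V) (w : V -> V -> R) : Prop :=
  (forall x y, w x y = w y x) /\ (forall x y, e x y -> 0 < w x y).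

Definition nb_walk (V : finType) (e : rel V) (v : V) (s : seq V) : bool :=
  match s with
  | [::] => false
  | x :: t =>
      (x == v) && path e x t &&
      all (fun i => nth v s i != nth v s i.+2) (iota 0 (size s - 2))
  end.

(* candidate vertices of the unraveled ball of radius r: sequences of length k+1, k <= r *)
Definition walk_type (V : finType) (r : nat) : finType :=
  {k : 'I_r.+1 & (k.+1).-tuple V}.

Definition walk_seq (V : finType) (r : nat) (x : walk_type V r) : seq V :=
  tval (tagged x).

Definition ball_set (V : finType) (e : rel V) (v : V) (r : nat) : {set walk_type V r} :=
  [set x | nb_walk e v (walk_seq x)].

Definition one_step_ext (V : eqType) (p q : seq V) : bool :=
  (size q == (size p).+1) && (take (size p) q == p).

Definition ball_adj (R : realType) (V : finType) (e : rel V) (w : V -> V -> R)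
    (v : V) (r : nat) : 'M[R]_#|ball_set e v r| :=
  \matrix_(i, j)
    (let p := walk_seq (enum_val i) in
     let q := walk_seq (enum_val j) in
     if one_step_ext p q || one_step_ext q p then w (last v p) (last v q) else 0).

Definition cmod (R : rcfType) (z : R[i]) : R :=
  Num.sqrt (complex.Re z ^+ 2 + complex.Im z ^+ 2).

Definition spectral_radius (R : realType) (n : nat) (A : 'M[R]_n) : R :=
  sup [set x : R | exists z : R[i],
         eigenvalue (map_mx (fun a : R => (a%:C)%C) A) z /\ x = cmod z].

Definition lambda1_ball (R : realType) (V : finType) (e : rel V) (w : V -> V -> R)
    (v : V) (r : nat) : R :=
  spectral_radius (ball_adj e w v r).

(* Main.v *)
Require Import Defs.
From HB Require Import structures.
From mathcomp Require Import all_boot all_order all_algebra.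
From mathcomp Require Import all_classical all_reals all_analysis.
From mathcomp Require Import complex.
From mathcomp Require Import zify ring.
Import Order.TTheory GRing.Theory Num.Theory.
Local Open Scope ring_scope.
Set Implicit Arguments. Unset Strict Implicit. Unset Printing Implicit Defensive.

Section Seqs.
Variable V : finType.

Fixpoint Ls (n : nat) : seq (seq V) :=
  if n is n'.+1 then [seq rcons s x | s <- Ls n', x <- enum V] else [:: [::]].

Lemma mem_Ls n s : (s \in Ls n) = (size s == n).
Proof.
elim: n s => [|n IH] s /=; first by case: s.
apply/idP/idP.
  case/allpairsP => [[t x] /= [ht _ ->]].
  by rewrite size_rcons eqSS -IH.
case: s => [//|x t] /= hs.
rewrite lastI; apply: allpairs_f; last by rewrite mem_enum.
by rewrite IH size_belast.
Qed.

Lemma uniq_Ls n : uniq (Ls n).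
Proof.
elim: n => [//|n IH] /=.
apply: allpairs_uniq => //; first exact: enum_uniq.
by move=> [s1 x1] [s2 x2] _ _ /= /rcons_inj.
Qed.

Lemma size_Ls n s : s \in Ls n -> size s = n.
Proof. by rewrite mem_Ls => /eqP. Qed.

End Seqs.
Section NB.
Variables (V : finType) (e : rel V) (v0 : V).

Lemma last_def (s : seq V) a b : s != [::] -> last a s = last b s.
Proof. by case: s. Qed.

Lemma nb_walk1 v x : nb_walk e v [:: x] = (x == v).
Proof. by rewrite /nb_walk /= !andbT. Qed.

Lemma nb_walk2 v x y : nb_walk e v [:: x; y] = (x == v) && e x y.
Proof. by rewrite /nb_walk /= !andbT. Qed.

Lemma nb_walk_cons v x t : nb_walk e v (x :: t) =
  [&& x == v, path e x t &
    all (fun i => nth v (x :: t) i != nth v (x :: t) i.+2) (iota 0 (size (x :: t) - 2))].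
Proof. by rewrite /nb_walk andbA. Qed.

Lemma nb_walk_rcons v s z : s != [::] ->
  nb_walk e v (rcons s z) =
  [&& nb_walk e v s, e (last v0 s) z & ((size s <= 1)%N || (z != nth v0 s (size s - 2)))].
Proof.
case: s => [//|x t] _.
rewrite rcons_cons !nb_walk_cons rcons_path -rcons_cons size_rcons.
set s := x :: t.
have -> : last x t = last v0 s by [].
set Pn := (fun i => _ != _).
set Po := (fun i => _ != _).
have -> : ((size s).+1 - 2 = (size s).-1)%N by rewrite subn2.
case Ht : (size s) => [//|m].
case: m Ht => [|m] Ht.
  by rewrite /= !andbT andbA.
have -> : ((m.+2 - 2) = m)%N by rewrite subn2.
have -> : iota 0 m.+2.-1 = rcons (iota 0 m) m.
  by rewrite -addn1 iotaD add0n /= cats1.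
rewrite all_rcons.
have -> : all Pn (iota 0 m) = all Po (iota 0 m).
  apply: eq_in_all => i; rewrite mem_iota add0n => /andP[_ hi].
  have E1 : nth v (rcons s z) i = nth v s i by rewrite nth_rcons Ht ifT //; lia.
  have E2 : nth v (rcons s z) i.+2 = nth v s i.+2 by rewrite nth_rcons Ht ifT //; lia.
  by rewrite /Pn /Po E1 E2.
have E3 : nth v (rcons s z) m = nth v0 s m.
  by rewrite nth_rcons Ht ifT; [apply: set_nth_default; rewrite Ht|]; lia.
have E4 : nth v (rcons s z) m.+2 = z by rewrite nth_rcons Ht ltnn eqxx.
rewrite /Pn E3 E4 /=.
case: (x == v) => //=.
case: (path e x t) => //=.
case: (all Po (iota 0 m)); rewrite ?andbF ?andbT ?andFb //.
by rewrite /= eq_sym.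
Qed.

End NB.

Section Walks.
Variables (R : realType) (V : finType) (e : rel V) (v0 : V).
Hypothesis esym : forall x y, e x y = e y x.
Hypothesis hdeg : forall u : V, (2 <= deg e u)%N.

Definition dg (u : V) : R := (deg e u)%:R.
Definition isq (u : V) : R := (Num.sqrt (dg u - 1))^-1.
Definition sig2 (s : seq V) : R := \prod_(i <- iota 1 (size s - 2)) isq (nth v0 s i).
Definition pen (s : seq V) : V := nth v0 s (size s - 2).
Definition lst (s : seq V) : V := last v0 s.
Definition nbR (v : V) (s : seq V) : R := (nb_walk e v s)%:R.

Lemma sumLS n (F : seq V -> R) :
  \sum_(s <- Ls V n.+1) F s = \sum_(s <- Ls V n) \sum_x F (rcons s x).
Proof.
rewrite /= big_allpairs_dep; apply: eq_bigr => s _.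
by rewrite big_enum.
Qed.

Lemma sumL0 (F : seq V -> R) : \sum_(s <- Ls V 0) F s = F [::].
Proof. by rewrite /= big_seq1. Qed.

Lemma dg_gt1 u : 1 < dg u.
Proof. by rewrite /dg ltr1n. Qed.

Lemma isq2 u : isq u ^+ 2 * (dg u - 1) = 1.
Proof.
have h : 0 < dg u - 1 by rewrite subr_gt0 dg_gt1.
rewrite /isq exprVn sqr_sqrtr ?ltW // mulVf //.
by rewrite gt_eqF.
Qed.

Lemma isq_sqrt u : isq u * (dg u - 1) = Num.sqrt (dg u - 1).
Proof.
have h : 0 < dg u - 1 by rewrite subr_gt0 dg_gt1.
rewrite /isq -{2}(sqr_sqrtr (ltW h)) expr2 mulrA mulVf ?mul1r //.
by rewrite gt_eqF // sqrtr_gt0.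
Qed.

Lemma sig2_rcons s z : (1 < size s)%N -> sig2 (rcons s z) = sig2 s * isq (lst s).
Proof.
move=> hs; rewrite /sig2 size_rcons.
have -> : ((size s).+1 - 2 = (size s - 2) + 1)%N by lia.
rewrite iotaD big_cat /= big_seq1.
congr (_ * _).
  rewrite !big_seq; apply: eq_bigr => i; rewrite mem_iota => hi.
  rewrite nth_rcons ifT //; lia.
rewrite /lst nth_rcons ifT; last by lia.
by rewrite -nth_last; congr (isq (nth _ _ _)); lia.
Qed.

Lemma sig2_2 x y : sig2 [:: x; y] = 1.
Proof. by rewrite /sig2 /= big_nil. Qed.

Lemma pen_rcons s z : s != [::] -> pen (rcons s z) = lst s.
Proof.
case: s => [//|x t] _; rewrite /pen /lst size_rcons nth_rcons /=.
have -> : ((size t).+2 - 2 = size t)%N by lia.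
by rewrite ltnSn; have := nth_last v0 (x :: t).
Qed.

Lemma lst_rcons s z : lst (rcons s z) = z.
Proof. by rewrite /lst last_rcons. Qed.

Lemma sum_pred1v (x : V) (c : R) : \sum_v ((x == v)%:R * c) = c.
Proof.
rewrite (bigD1 x) //= eqxx mul1r big1 ?addr0 // => u hu.
by rewrite eq_sym (negbTE hu) mul0r.
Qed.

Lemma deg_sum x : \sum_u ((e x u)%:R : R) = dg x.
Proof.
rewrite /dg /deg -sum1_card natr_sum [in RHS]big_mkcond /=.
by apply: eq_bigr => u _; rewrite inE; case: (e x u).
Qed.

Lemma cnt x z : e x z -> \sum_u ((e u x && (u != z))%:R : R) = dg x - 1.
Proof.
move=> hxz; have := deg_sum x; rewrite (bigD1 z) //= hxz => <-.
rewrite (bigD1 z) //= eqxx andbF add0r addrC addrK.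
by apply: eq_bigr => u hu; rewrite hu andbT esym.
Qed.

Lemma Ls_ne n s : s \in Ls V n.+1 -> s != [::].
Proof. by move/size_Ls; case: s. Qed.

Lemma nbR_rcons v s z : (1 < size s)%N ->
  nbR v (rcons s z) = nbR v s * ((e (lst s) z && (z != pen s))%:R).
Proof.
move=> hs; rewrite /nbR (nb_walk_rcons e v0); last by case: s hs.
rewrite leqNgt hs /= -natrM; congr (_%:R).
by rewrite /lst /pen; case: (nb_walk e v s); case: (e _ z); case: (z != _).
Qed.

Lemma W2_of_W k (phi : V -> V -> V -> R) :
  (\sum_v \sum_(s <- Ls V k.+2) nbR v s *
      (sig2 s ^+ 2 * (\sum_z (e (lst s) z && (z != pen s))%:R * phi (pen s) (lst s) z))
   = \sum_u \sum_x (e u x)%:R *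
      (\sum_z (e x z && (z != u))%:R * phi u x z)) ->
  \sum_v \sum_(s <- Ls V k.+2) \sum_z nbR v (rcons s z) * (sig2 s ^+ 2 * phi (pen s) (lst s) z)
  = \sum_x \sum_z (e x z)%:R * \sum_u (e u x && (u != z))%:R * phi u x z.
Proof.
move=> HW.
transitivity (\sum_v \sum_(s <- Ls V k.+2) nbR v s *
      (sig2 s ^+ 2 * (\sum_z (e (lst s) z && (z != pen s))%:R * phi (pen s) (lst s) z))).
  apply: eq_bigr => v _; rewrite big_seq [in RHS]big_seq.
  apply: eq_bigr => s hs; rewrite !mulr_sumr; apply: eq_bigr => z _.
  rewrite nbR_rcons ?(size_Ls hs) //.
  by rewrite mulrCA -!mulrA; ring.
apply: (etrans HW).
under eq_bigr => u _ do under eq_bigr => x _ do rewrite mulr_sumr.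
under [RHS]eq_bigr => x _ do under eq_bigr => z _ do rewrite mulr_sumr.
rewrite exchange_big; apply: eq_bigr => x _.
rewrite exchange_big; apply: eq_bigr => z _.
apply: eq_bigr => u _.
rewrite !mulrA -!natrM; congr (_%:R * _).
by rewrite [u == z]eq_sym; case: (e u x); case: (e x z); case: (z == u).
Qed.

Lemma Wlem k (psi : V -> V -> R) :
  \sum_v \sum_(s <- Ls V k.+2) nbR v s * (sig2 s ^+ 2 * psi (pen s) (lst s))
  = \sum_x \sum_y (e x y)%:R * psi x y.
Proof.
elim: k psi => [|k IH] psi.
  under eq_bigr => v _ do rewrite sumLS sumLS sumL0 /=.
  rewrite exchange_big; apply: eq_bigr => x _.
  rewrite exchange_big; apply: eq_bigr => y _.
  rewrite -[RHS](sum_pred1v x); apply: eq_bigr => v _.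
  rewrite /nbR nb_walk2 sig2_2 expr1n mul1r /pen /lst /=.
  by case: (x == v); case: (e x y); rewrite ?mul0r ?mul1r.
have := W2_of_W (k:=k) (phi:=fun u x z => isq x ^+ 2 * psi x z) (IH _).
move=> HW2.
transitivity (\sum_v \sum_(s <- Ls V k.+2) \sum_z nbR v (rcons s z) *
    (sig2 s ^+ 2 * (isq (lst s) ^+ 2 * psi (lst s) z))).
  apply: eq_bigr => v _; rewrite sumLS big_seq [in RHS]big_seq.
  apply: eq_bigr => s hs; apply: eq_bigr => z _.
  rewrite sig2_rcons ?(size_Ls hs) // pen_rcons ?(Ls_ne hs) // lst_rcons.
  by rewrite exprMn -mulrA.
apply: (etrans HW2); apply: eq_bigr => x _; apply: eq_bigr => z _.
case hxz : (e x z); last by rewrite !mul0r.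
rewrite -big_distrl /= cnt // !mul1r mulrA (mulrC (dg x - 1)) isq2 mul1r.
by [].
Qed.

End Walks.

Section Sums.
Variables (R : realType) (V : finType) (e : rel V) (v0 : V).
Hypothesis esym : forall x y, e x y = e y x.
Hypothesis hdeg : forall u : V, (2 <= deg e u)%N.
Variables (w : V -> V -> R) (g : V -> R) (r : nat).
Hypothesis hg : forall u, 0 < g u.

Local Notation dg := (dg R e).
Local Notation lst := (lst v0).
Local Notation pen := (pen v0).
Local Notation sig2 := (sig2 R e v0).
Local Notation nbR := (nbR R e).

Definition acoef (k : nat) : R := sin (k.+1%:R * (pi / (r + 2)%:R)).
Definition sig (s : seq V) : R := if (size s <= 1)%N then Num.sqrt (dg (lst s)) else sig2 s.
Definition hf (s : seq V) : R := acoef (size s).-1 * Num.sqrt (g (lst s)) * sig s.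
Definition Dsum : R := \sum_u g u * dg u.
Definition Nf (c : V -> R) : R :=
  \sum_x \sum_z (e x z)%:R * (c x * (w x z * Num.sqrt (g x) * Num.sqrt (g z))).

Lemma hf1 x : hf [:: x] = acoef 0 * Num.sqrt (g x) * Num.sqrt (dg x).
Proof. by []. Qed.

Lemma hf_big s : (1 < size s)%N -> hf s = acoef (size s).-1 * Num.sqrt (g (lst s)) * sig2 s.
Proof. by move=> hs; rewrite /hf /sig leqNgt hs. Qed.

Lemma normK k : \sum_v \sum_(s <- Ls V k.+1) nbR v s * hf s ^+ 2 = acoef k ^+ 2 * Dsum.
Proof.
case: k => [|k].
  under eq_bigr => v _ do rewrite sumLS sumL0 /=.
  rewrite exchange_big /Dsum mulr_sumr; apply: eq_bigr => x _.
  rewrite -[RHS](sum_pred1v x); apply: eq_bigr => v _.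
  rewrite /nbR nb_walk1 hf1 /lst /= !exprMn !sqr_sqrtr ?ler0n ?ltW //.
  by rewrite eq_sym; ring.
transitivity (\sum_v \sum_(s <- Ls V k.+2) nbR v s *
   (sig2 s ^+ 2 * (fun _ y => acoef k.+1 ^+ 2 * g y) (pen s) (lst s))).
  apply: eq_bigr => v _; rewrite big_seq [in RHS]big_seq.
  apply: eq_bigr => s hs; rewrite hf_big ?(size_Ls hs) //.
  rewrite /= !exprMn sqr_sqrtr ?ltW //; ring.
apply: (etrans (Wlem v0 esym hdeg k (fun _ y => acoef k.+1 ^+ 2 * g y))).
rewrite /Dsum mulr_sumr exchange_big; apply: eq_bigr => y _.
rewrite -(deg_sum R e y) !mulr_sumr; apply: eq_bigr => x _.
by rewrite esym; ring.
Qed.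

Lemma crossK0 :
  \sum_v \sum_(s <- Ls V 1) \sum_z nbR v (rcons s z) * (hf s * w (lst s) z * hf (rcons s z))
  = acoef 0 * acoef 1 * Nf (fun x => Num.sqrt (dg x)).
Proof.
under eq_bigr => v _ do rewrite sumLS sumL0 /=.
rewrite exchange_big /Nf mulr_sumr; apply: eq_bigr => x _.
rewrite exchange_big mulr_sumr; apply: eq_bigr => z _.
rewrite -[RHS](sum_pred1v x); apply: eq_bigr => v _.
rewrite /nbR nb_walk2 hf1 (hf_big (s := [:: x; z])) // sig2_2 /lst /=.
by case: (x == v); case: (e x z); rewrite /= ?mul0r ?mul1r; ring.
Qed.

Lemma crossK k :
  \sum_v \sum_(s <- Ls V k.+2) \sum_z nbR v (rcons s z) * (hf s * w (lst s) z * hf (rcons s z))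
  = acoef k.+1 * acoef k.+2 * Nf (fun x => Num.sqrt (dg x - 1)).
Proof.
set phi := fun (u x z : V) => acoef k.+1 * acoef k.+2 *
   (isq R e x * (w x z * Num.sqrt (g x) * Num.sqrt (g z))).
transitivity (\sum_v \sum_(s <- Ls V k.+2) \sum_z nbR v (rcons s z) *
   (sig2 s ^+ 2 * phi (pen s) (lst s) z)).
  apply: eq_bigr => v _; rewrite big_seq [in RHS]big_seq.
  apply: eq_bigr => s hs; apply: eq_bigr => z _.
  have hs2 := size_Ls hs.
  rewrite hf_big ?hs2 // hf_big ?size_rcons ?hs2 // sig2_rcons ?hs2 //.
  rewrite ?lst_rcons ?size_rcons ?hs2 /phi /=; ring.
apply: (etrans (W2_of_W (Wlem v0 esym hdeg _ _))).
rewrite /Nf mulr_sumr; apply: eq_bigr => x _.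
rewrite mulr_sumr; apply: eq_bigr => z _.
case hxz : (e x z); last by rewrite !mul0r mulr0.
rewrite -big_distrl /= (cnt R esym) // /phi -(isq_sqrt R hdeg); ring.
Qed.

End Sums.

Section Ball.
Variables (R : realType) (V : finType) (e : rel V) (v0 : V).
Variables (w : V -> V -> R) (r : nat) (v : V).
Hypothesis wsym : forall x y, w x y = w y x.

Local Notation nbR := (nbR R e).
Local Notation lst := (lst v0).

Definition Lall : seq (seq V) := flatten [seq Ls V k.+1 | k <- iota 0 r.+1].

Lemma sum_Lall (X : seq V -> R) :
  \sum_(s <- Lall) X s = \sum_(k < r.+1) \sum_(s <- Ls V k.+1) X s.
Proof. by rewrite /Lall big_flatten big_map -(big_mkord xpredT (fun k => \sum_(s <- Ls V k.+1) X s)) /index_iota subn0. Qed.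

Lemma mem_Lall s : (s \in Lall) = (0 < size s <= r.+1)%N.
Proof.
apply/flattenP/idP.
  move=> [l /mapP [k hk ->]]; rewrite mem_iota add0n in hk.
  by rewrite mem_Ls => /eqP ->; lia.
move=> hs; exists (Ls V (size s)); last by rewrite mem_Ls.
apply/mapP; exists (size s).-1; first by rewrite mem_iota; lia.
by rewrite prednK //; lia.
Qed.

Lemma sum_tuple n (G : seq V -> R) :
  \sum_(t : n.-tuple V) G (tval t) = \sum_(s <- Ls V n) G s.
Proof.
transitivity (\sum_(s <- map (@tval n V) (index_enum (n.-tuple V))) G s).
  by rewrite big_map.
apply: perm_big; apply: uniq_perm.
- by rewrite map_inj_uniq ?index_enum_uniq //; apply: val_inj.
- exact: uniq_Ls.
move=> s; rewrite mem_Ls; apply/mapP/idP.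
  by move=> [t _ ->]; rewrite size_tuple.
move=> hs; exists (Tuple hs) => //; exact: mem_index_enum.
Qed.

Lemma sum_ball (F : seq V -> R) :
  \sum_(i < #|ball_set e v r|) F (walk_seq (enum_val i))
  = \sum_(s <- Lall) nbR v s * F s.
Proof.
rewrite -(big_enum_val (fun y => F (walk_seq y))).
rewrite big_mkcond /= sum_Lall.
transitivity (\sum_(y : walk_type V r) nbR v (walk_seq y) * F (walk_seq y)).
  by apply: eq_bigr => y _; rewrite inE /nbR; case: (nb_walk e v _); rewrite ?mul1r ?mul0r.
transitivity (\sum_(k < r.+1) \sum_(t : (k.+1).-tuple V) nbR v (tval t) * F (tval t)); last first.
  by apply: eq_bigr => k _; rewrite (sum_tuple _ (fun s => nbR v s * F s)).
rewrite (sig_big_dep xpredT (fun _ _ => true) (fun (k : 'I_r.+1) (t : (k.+1).-tuple V) => nbR v (tval t) * F (tval t))).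
by [].
Qed.

Definition ext1 (p q : seq V) : bool := one_step_ext p q.

Lemma child_sum p (Y : seq V -> R) : (0 < size p <= r.+1)%N ->
  \sum_(q <- Lall) (one_step_ext p q)%:R * Y q
  = if (size p <= r)%N then \sum_z Y (rcons p z) else 0.
Proof.
move=> hp; rewrite sum_Lall.
transitivity (\sum_(k < r.+1) if (k == size p :> nat) then \sum_z Y (rcons p z) else 0).
  apply: eq_bigr => k _; rewrite sumLS.
  case: eqP => hk.
    rewrite hk (bigD1_seq p) ?mem_Ls ?uniq_Ls //=.
    rewrite (big1_seq (Ls V (size p)) (fun i => i != p)) ?addr0.
      apply: eq_bigr => z _.
      by rewrite /one_step_ext size_rcons -cats1 take_size_cat // !eqxx mul1r.
    move=> s /andP [hsp hs].
    apply: big1 => z _.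
    rewrite /one_step_ext size_rcons (size_Ls hs) -cats1 take_size_cat ?(size_Ls hs) //.
    by rewrite (negbTE hsp) andbF mul0r.
  apply: big1_seq => s /andP [_ hs]; apply: big1 => z _.
  rewrite /one_step_ext size_rcons (size_Ls hs).
  by rewrite eqSS (introF eqP hk) mul0r.
case: (leqP (size p) r) => hpr.
  have hk : (size p < r.+1)%N by lia.
  rewrite (bigD1 (Ordinal hk)) //= eqxx.
  rewrite [X in _ + X](_ : _ = 0) ?addr0 //.
  apply: big1 => k hk'.
  rewrite ifF //; apply/negbTE; apply: contra hk' => /eqP h.
  by apply/eqP/val_inj.
by apply: big1 => k _; rewrite ifF //; apply/negbTE; have := ltn_ord k; rewrite neq_ltn; lia.
Qed.

End Ball.

Section Ball2.
Variables (R : realType) (V : finType) (e : rel V) (v0 : V).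
Variables (w : V -> V -> R) (r : nat) (v : V).
Hypothesis wsym : forall x y, w x y = w y x.

Local Notation nbR := (nbR R e).
Local Notation lst := (lst v0).
Local Notation Lall := (Lall V r).

Lemma nbR_prefix p z : p != [::] -> nbR v p * nbR v (rcons p z) = nbR v (rcons p z).
Proof.
move=> hp; rewrite /nbR (nb_walk_rcons e v0) //.
by case: (nb_walk e v p); rewrite ?mul1r ?mul0r.
Qed.

Lemma Lall_ne s : s \in Lall -> s != [::].
Proof. by rewrite mem_Lall; case: s. Qed.

Lemma Q_eq (h : seq V -> R) :
  \sum_i \sum_j h (walk_seq (enum_val i)) * ball_adj e w v r i j * h (walk_seq (enum_val j))
  = 2 * \sum_(k < r) \sum_(s <- Ls V k.+1) \sum_z
          nbR v (rcons s z) * (h s * w (lst s) z * h (rcons s z)).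
Proof.
set Fq := fun p q : seq V => h p * (if one_step_ext p q || one_step_ext q p
                                    then w (last v p) (last v q) else 0) * h q.
set G := fun p q : seq V => (one_step_ext p q)%:R * (h p * w (lst p) (lst q) * h q).
transitivity (\sum_(i < #|ball_set e v r|)
   (fun p => \sum_(q <- Lall) nbR v q * Fq p q) (walk_seq (enum_val i))).
  apply: eq_bigr => i _ /=.
  rewrite -(sum_ball e r v (fun q => Fq (walk_seq (enum_val i)) q)).
  by apply: eq_bigr => j _; rewrite mxE.
rewrite (sum_ball e r v (fun p => \sum_(q <- Lall) nbR v q * Fq p q)).
set X := \sum_(p <- Lall) nbR v p * \sum_(q <- Lall) nbR v q * G p q.
transitivity (X + X).
  transitivity (X + \sum_(p <- Lall) nbR v p * \sum_(q <- Lall) nbR v q * G q p).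
    rewrite /X -big_split /= big_seq [in RHS]big_seq; apply: eq_bigr => p hp.
    rewrite -mulrDr -big_split /= big_seq [in RHS]big_seq; congr (_ * _).
    apply: eq_bigr => q hq; rewrite -mulrDr; congr (_ * _).
    rewrite /Fq /G /lst (last_def (s:=p) v v0) ?(Lall_ne hp) //.
    rewrite (last_def (s:=q) v v0) ?(Lall_ne hq) // [w (last v0 q) _]wsym.
    rewrite /one_step_ext.
    case: (size q =P (size p).+1) => hs1; case: (size p =P (size q).+1) => hs2 /=.
    - by exfalso; lia.
    - by case: (take _ _ == _) => /=; rewrite ?(mul1r, mul0r, addr0, add0r, mulr0); ring.
    - by case: (take _ _ == _) => /=; rewrite ?(mul1r, mul0r, addr0, add0r, mulr0); ring.
    - by rewrite !mul0r mulr0 mul0r addr0.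
  congr (_ + _); rewrite /X.
  transitivity (\sum_(p <- Lall) \sum_(q <- Lall) nbR v p * (nbR v q * G q p)).
    by apply: eq_bigr => p _; rewrite mulr_sumr.
  rewrite exchange_big; apply: eq_bigr => q _; rewrite mulr_sumr.
  by apply: eq_bigr => p _; rewrite mulrCA.
suff -> : X = \sum_(k < r) \sum_(s <- Ls V k.+1) \sum_z
          nbR v (rcons s z) * (h s * w (lst s) z * h (rcons s z)) by ring.
rewrite /X.
transitivity (\sum_(p <- Lall) nbR v p * if (size p <= r)%N then
     \sum_z nbR v (rcons p z) * (h p * w (lst p) z * h (rcons p z)) else 0).
  rewrite big_seq [in RHS]big_seq; apply: eq_bigr => p hp; congr (_ * _).
  transitivity (\sum_(q <- Lall) (one_step_ext p q)%:R * (nbR v q * (h p * w (lst p) (lst q) * h q))).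
    by apply: eq_bigr => q _; rewrite /G mulrCA.
  apply: (etrans (child_sum (fun q => nbR v q * (h p * w (lst p) (lst q) * h q)) _)).
    by rewrite -mem_Lall.
  by case: ifP => //= _; apply: eq_bigr => z _; rewrite lst_rcons.
rewrite sum_Lall big_ord_recr.
rewrite [\sum_(s <- Ls V r.+1) _](_ : _ = 0); last first.
  by apply: big1_seq => s /andP [_ hs]; rewrite (size_Ls hs) ltnn mulr0.
apply: (etrans (addr0 _)).
apply: eq_bigr => k _; rewrite big_seq [in RHS]big_seq; apply: eq_bigr => s hs.
rewrite (size_Ls hs) /= ltn_ord mulr_sumr; apply: eq_bigr => z _.
by rewrite mulrA nbR_prefix // (Ls_ne hs).
Qed.

End Ball2.

Section Trig.
Variables (R : realType) (r : nat).
Local Notation th := (pi / (r + 2)%:R : R).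
Local Notation a := (acoef R r).

Lemma acoef_last : a r.+1 = 0.
Proof.
by rewrite /acoef -addn2 mulrC divfK ?sinpi // pnatr_eq0 addn2.
Qed.

Lemma acoef_rec k : a k.+1 + sin (k%:R * th) = 2 * cos th * a k.
Proof.
rewrite /acoef.
have -> : (k.+2%:R * th) = k.+1%:R * th + th by rewrite -[k.+2]addn1 natrD; ring.
have -> : (k%:R * th) = k.+1%:R * th - th by rewrite -[k.+1]addn1 natrD; ring.
rewrite sinD sinB; ring.
Qed.

Lemma trig_sum :
  \sum_(k < r) a k * a k.+1 = cos th * \sum_(k < r.+1) a k ^+ 2.
Proof.
have H2 : 2 * (cos th * \sum_(k < r.+1) a k ^+ 2)
   = \sum_(k < r.+1) a k * a k.+1 + \sum_(k < r.+1) a k * sin (k%:R * th).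
  rewrite -big_split /= mulr_sumr mulr_sumr; apply: eq_bigr => k _.
  by rewrite -mulrDr acoef_rec; ring.
have E1 : \sum_(k < r.+1) a k * a k.+1 = \sum_(k < r) a k * a k.+1.
  by rewrite big_ord_recr /= acoef_last mulr0 addr0.
have E2 : \sum_(k < r.+1) a k * sin (k%:R * th) = \sum_(k < r) a k * a k.+1.
  rewrite big_ord_recl /= mul0r sin0 mulr0 add0r.
  by apply: eq_bigr => k _; rewrite /bump /= add1n mulrC.
apply: (mulfI (x := 2)); first by rewrite pnatr_eq0.
by rewrite H2 E1 E2; ring.
Qed.

End Trig.

From mathcomp Require Import spectral sesquilinear.

Section Rayleigh.
Variable R : realType.
Local Notation C := (R[i]).
Local Open Scope sesquilinear_scope.

Lemma conjR (a : R) : ((a%:C)%C : C)^* = (a%:C)%C.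
Proof. by apply: conj_Creal; rewrite complex_real. Qed.

Lemma rayleigh n (A : 'M[R]_n) (x : 'I_n -> R) :
  (forall i j, A i j = A j i) ->
  \sum_i \sum_j x i * A i j * x j <= spectral_radius A * \sum_i x i ^+ 2.
Proof.
move=> Asym.
set B : 'M[C]_n := map_mx (fun a : R => (a%:C)%C) A.
have Bh : B \is hermsymmx.
  apply: realsym_hermsym.
    apply/is_hermitianmxP; rewrite expr0 scale1r; apply/matrixP => i j.
    by rewrite !mxE Asym.
  by apply/mxOverP => i j; rewrite mxE complex_real.
have /orthomx_spectralP HB := hermitian_normalmx Bh.
set P := spectralmx B in HB.
set sp := spectral_diag B in HB.
have Pu : P \is unitarymx := spectral_unitarymx B.
have PU : P \in unitmx := spectral_unit B.
have PinvE : invmx P = P ^t* := invmx_unitary Pu.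
have spreal : forall i, sp 0 i \is Num.real.
  by move=> i; have /mxOverP := hermitian_spectral_diag_real Bh; apply.
have PB : P *m B = diag_mx sp *m P by rewrite {1}HB -mulmxA mulKVmx.
have eig : forall i, eigenvalue B (sp 0 i).
  move=> i; apply/eigenvalueP; exists (row i P).
    rewrite -row_mul PB mul_diag_mx; apply/rowP => j; rewrite !mxE.
    by [].
  apply/negP => /eqP h0.
  have := mulmxV PU; move/(congr1 (row i)).
  rewrite row_mul h0 mul0mx => /rowP /(_ i); rewrite !mxE eqxx /= => /eqP.
  by rewrite eq_sym oner_eq0.
have eig_sp : forall z, eigenvalue B z -> exists i, z = sp 0 i.
  move=> z /eigenvalueP [v hv v0].
  set u := v *m invmx P.
  have hvu : v = u *m P by rewrite /u mulmxKV.
  have hu : u *m diag_mx sp = z *: u.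
    have : u *m diag_mx sp *m P = (z *: u) *m P.
      by rewrite -mulmxA -PB mulmxA -hvu hv hvu scalemxAl.
    by move/(congr1 (mulmx^~ (invmx P))); rewrite !mulmxK.
  have [i hi] : exists i, u 0 i != 0.
    case: (pselect (exists i, u 0 i != 0)) => // hno; exfalso.
    move/negP: v0; apply; apply/eqP; rewrite hvu.
    have -> : u = 0; last by rewrite mul0mx.
    apply/rowP => i; rewrite [RHS]mxE; apply/eqP; apply/negPn/negP => h.
    by apply: hno; exists i.
  exists i; move/rowP: hu => /(_ i); rewrite mul_mx_diag [LHS]mxE [RHS]mxE => h.
  by apply: (mulfI hi); rewrite h mulrC.
have hub : has_ubound [set t : R | exists z : C, eigenvalue B z /\ t = cmod z].
  exists (\sum_i cmod (sp 0 i)) => t [z [hz ->]].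
  have [i ->] := eig_sp z hz.
  rewrite (bigD1 i) //= lerDl sumr_ge0 // => j _.
  exact: sqrtr_ge0.
have le_rho : forall i, cmod (sp 0 i) <= spectral_radius A.
  move=> i; apply: (ub_le_sup hub); exists (sp 0 i); split => //.
set xc : 'rV[C]_n := \row_i ((x i)%:C)%C.
set y := xc *m P ^t*.
have Yt : y ^t* = P *m xc ^t* by rewrite /y trmx_mul map_mxM trmxCK.
have YY : y *m y ^t* = xc *m xc ^t*.
  by rewrite Yt /y mulmxA -[xc *m P ^t* *m P]mulmxA -PinvE mulVmx // mulmx1.
have YDY : y *m diag_mx sp *m y ^t* = xc *m B *m xc ^t*.
  by rewrite Yt /y HB PinvE !mulmxA.
have E2 : ((\sum_i x i ^+ 2)%:C)%C = \sum_i y 0 i * (y 0 i)^*.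
  transitivity ((y *m y ^t*) 0 0); last first.
    by rewrite mxE; apply: eq_bigr => i _; rewrite !mxE.
  rewrite YY mxE rmorph_sum; apply: eq_bigr => i _.
  by rewrite !mxE conjR -rmorphM expr2.
have E1 : ((\sum_i \sum_j x i * A i j * x j)%:C)%C = \sum_i sp 0 i * (y 0 i * (y 0 i)^*).
  transitivity ((y *m diag_mx sp *m y ^t*) 0 0); last first.
    rewrite mul_mx_diag mxE; apply: eq_bigr => i _; rewrite !mxE; ring.
  rewrite YDY mxE rmorph_sum.
  under eq_bigr => i _ do rewrite rmorph_sum.
  rewrite exchange_big; apply: eq_bigr => j _.
  rewrite !mxE big_distrl; apply: eq_bigr => i _.
  by rewrite !mxE conjR !rmorphM.
rewrite -lecR E1.
have -> : ((spectral_radius A * \sum_i x i ^+ 2)%:C)%C =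
    \sum_i ((spectral_radius A)%:C)%C * (y 0 i * (y 0 i)^*).
  by rewrite -mulr_sumr -E2 -rmorphM.
apply: ler_sum => i _.
rewrite -normCK; apply: ler_wpM2r; first exact: exprn_ge0 (normr_ge0 _).
apply: le_trans (real_ler_norm (spreal i)) _.
rewrite normc_def lecR; exact: le_rho.
Qed.
End Rayleigh.

From mathcomp Require Import lra.

Unset Implicit Arguments.

Theorem theorem1p5 (R : realType) (V : finType) (e : rel V) (w : V -> V -> R)
  (hsimple : simple_graph e) (hne : (0 < #|V|)%N) (hconn : connected_graph e)
  (hw : pos_weight e w) (hdeg : forall u : V, (2 <= deg e u)%N)
  (r : nat) (hr : (1 <= r)%N) (g : V -> R) (hg : forall u, 0 < g u) :
  exists v : V,
    lambda1_ball e w v r >=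
      2 * (\sum_(v1 : V) Num.sqrt ((deg e v1)%:R - 1) *
             \sum_(v2 : V | e v1 v2) w v1 v2 * Num.sqrt (g v1 * g v2))
        / (\sum_(u : V) g u * (deg e u)%:R)
        * cos (pi / (r + 2)%:R).
Proof.
case/card_gt0P: hne => v0 _.
have esym : forall x y, e x y = e y x := hsimple.1.
have wsym : forall x y, w x y = w y x := hw.1.
have wpos : forall x y, e x y -> 0 < w x y := hw.2.
set th : R := pi / (r + 2)%:R.
set Nst := \sum_(v1 : V) _.
set D := \sum_(u : V) _.
set c := 2 * Nst / D * cos th.
set hfv := hf e v0 g r.
set Q := fun v => \sum_i \sum_j hfv (walk_seq (enum_val i)) * ball_adj e w v r i j *
                  hfv (walk_seq (enum_val j)).
set N2 := fun v => \sum_(i < #|ball_set e v r|) hfv (walk_seq (enum_val i)) ^+ 2.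
have Dpos : 0 < D.
  rewrite /D (bigD1 v0) //= ltr_wpDr ?sumr_ge0 //.
    by move=> u _; rewrite mulr_ge0 ?ler0n ?ltW.
  by rewrite mulr_gt0 ?hg // ltr0n; have := hdeg v0; lia.
have DE : D = Dsum e g by [].
have NE : Nf e w g (fun x => Num.sqrt (dg R e x - 1)) = Nst.
  rewrite /Nf /Nst; apply: eq_bigr => x _.
  rewrite [in RHS]big_mkcond mulr_sumr; apply: eq_bigr => z _.
  case: (e x z) => /=; last by rewrite !mul0r mulr0.
  rewrite sqrtrM ?ltW // /dg; ring.
have pi0 := pi_gt0 R.
have th0 : 0 < th by rewrite /th divr_gt0 // ltr0n addn2.
have th2 : 2 * th <= pi.
  rewrite /th mulrA ler_pdivrMr ?ltr0n ?addn2 //.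
  have : (2 : R) <= (r + 2)%:R by rewrite ler_nat; lia.
  move=> h; nra.
have a0 : 0 < acoef R r 0.
  rewrite /acoef; apply: sin_gt0_pi; rewrite mul1r -/th; apply/andP; split; lra.
have a1 : 0 <= acoef R r 1.
  rewrite /acoef; apply: sin_ge0_pi; rewrite -/th; apply/andP; split; lra.
have NN : Nf e w g (fun x => Num.sqrt (dg R e x - 1)) <= Nf e w g (fun x => Num.sqrt (dg R e x)).
  apply: ler_sum => x _; apply: ler_sum => z _.
  case hxz : (e x z); last by rewrite !mul0r.
  rewrite !mul1r; apply: ler_wpM2r.
    by rewrite !mulr_ge0 ?sqrtr_ge0 ?ltW ?wpos.
  by rewrite ler_sqrt ?ler0n //; lra.
have SN2 : \sum_v N2 v = (\sum_(k < r.+1) acoef R r k ^+ 2) * D.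
  transitivity (\sum_v \sum_(k < r.+1) \sum_(s <- Ls V k.+1) nbR R e v s * hfv s ^+ 2).
    by apply: eq_bigr => v _; rewrite /N2 (sum_ball e r v (fun s => hfv s ^+ 2)) sum_Lall.
  rewrite exchange_big big_distrl; apply: eq_bigr => k _.
  by rewrite (normK v0 esym hdeg r hg).
have SQ : 2 * Nst * (cos th * \sum_(k < r.+1) acoef R r k ^+ 2) <= \sum_v Q v.
  have -> : \sum_v Q v = \sum_v 2 * \sum_(k < r) \sum_(s <- Ls V k.+1) \sum_z
          nbR R e v (rcons s z) * (hfv s * w (lst v0 s) z * hfv (rcons s z)).
    by apply: eq_bigr => v _; rewrite /Q (Q_eq e v0 r v wsym hfv).
  rewrite -trig_sum.
  have [r' hr'] : exists r', r = r'.+1 by exists r.-1; lia.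
  subst r.
  set F := fun v (k : nat) => \sum_(s <- Ls V k.+1) \sum_z
          nbR R e v (rcons s z) * (hfv s * w (lst v0 s) z * hfv (rcons s z)).
  set S := \sum_(k < r') acoef R r'.+1 k.+1 * acoef R r'.+1 k.+2.
  have E : \sum_v 2 * \sum_(k < r'.+1) F v k =
      2 * (acoef R r'.+1 0 * acoef R r'.+1 1 * Nf e w g (fun x => Num.sqrt (dg R e x))
           + S * Nst).
    transitivity (2 * \sum_(k < r'.+1) \sum_v F v k).
      by rewrite -mulr_sumr exchange_big.
    congr (_ * _); rewrite big_ord_recl; congr (_ + _).
      exact: (crossK0 e v0 w g r'.+1).
    rewrite /S mulr_suml; apply: eq_bigr => k _; rewrite -NE.
    exact: (crossK v0 esym hdeg w g r'.+1 k).
  rewrite E big_ord_recl -/S.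
  have h01 : 0 <= acoef R r'.+1 0 * acoef R r'.+1 1 by apply: mulr_ge0 => //; apply: ltW.
  rewrite /=.
  move: NN; rewrite NE => NN'.
  nra.
have c_ok : c * \sum_v N2 v <= \sum_v Q v.
  rewrite SN2.
  have -> : c * ((\sum_(k < r.+1) acoef R r k ^+ 2) * D) =
      2 * Nst * (cos th * \sum_(k < r.+1) acoef R r k ^+ 2).
    rewrite /c; field; exact: lt0r_neq0.
  exact: SQ.
have [v hv] : exists v, c * N2 v <= Q v.
  case: (pselect (exists v, c * N2 v <= Q v)) => // hno; exfalso.
  have hlt : forall v, Q v < c * N2 v.
    by move=> v; rewrite ltNge; apply/negP => h; apply: hno; exists v.
  have : \sum_v Q v < \sum_v c * N2 v.
    apply: ltr_sum => [|v _]; last exact: hlt.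
    by apply/hasP; exists v0 => //; rewrite mem_index_enum.
  by rewrite -mulr_sumr ltNge c_ok.
exists v.
have N2pos : 0 < N2 v.
  rewrite /N2 (sum_ball e r v (fun s => hfv s ^+ 2)) sum_Lall big_ord_recl ltr_wpDr //.
    apply: sumr_ge0 => k _; apply: sumr_ge0 => s _.
    by apply: mulr_ge0; rewrite ?ler0n ?sqr_ge0.
  rewrite sumLS sumL0 (bigD1 v) //= ltr_wpDr //.
    by apply: sumr_ge0 => x _; apply: mulr_ge0; rewrite ?ler0n ?sqr_ge0.
  rewrite /nbR nb_walk1 eqxx mul1r /hfv hf1 exprn_gt0 // !mulr_gt0 ?sqrtr_gt0 //.
  by rewrite /dg ltr0n; have := hdeg v; lia.
have Asym : forall i j, ball_adj e w v r i j = ball_adj e w v r j i.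
  by move=> i j; rewrite !mxE /= orbC wsym.
have hray := rayleigh (fun i => hfv (walk_seq (enum_val i))) Asym.
rewrite /lambda1_ball -(ler_pM2r N2pos).
exact: le_trans hv hray.
Qed.
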